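(* Let $u_0,\dots,u_4$ be pairwise distinct complex numbers with $M_i(U)\neq 0$ for all $i$, let $Y\subset\mathbb{P}^4=\mathrm{Proj}\,\mathbb{C}[v_0,\dots,v_4]$ be the quintic $\sum_iM_i(U)v_i^5=0$ (the Fermat quintic after a diagonal rescaling of coordinates), and let $\Lambda$ be the plane $\sum_iM_i(U)v_i=0,\ \sum_iM_i(U)u_i^4v_i=0$. Let $P=(1,1,1,1,1)$, $Q=(u_0,\dots,u_4)$ and $R=(l_0,\dots,l_4)$ be vectors spanning $\Lambda$, and use coordinates $[x:y:z]$ on $\Lambda$ for the point $xP+yQ+zR$. Define $S_{mn}$ by $\delta(U)S_{mn}=\sum_{i=0}^4M_i(U)u_i^ml_i^n$, and let $\alpha,\beta$ satisfy $S_{30}\alpha^2+2S_{31}\alpha+S_{32}=0$ and $S_{20}\beta^2+2S_{11}\beta+S_{02}=0$. Then the plane $\Lambda$ cuts $Y$ along a conic of the form $d z^2-(\beta x+\alpha y)z+xy=0$ and a cubic (possibly degenerate) passing through $P$ and $Q$ if and only if the following equations are satisfied for some parameter $d\in\mathbb{C}$: $10S_{03}+\beta g_2(P)-g_1(P)d=0$, $10S_{23}+\alpha g_2(Q)-g_1(Q)d=0$, $5S_{04}+\beta g_3-g_2(P)d=0$, $5S_{14}+\alpha g_3-g_2(Q)d=0$, $S_{05}-g_3d=0$, where $g_1(P)=20S_{11}+10S_{20}\beta$, $g_1(Q)=20S_{31}+10S_{30}\alpha$, $g_{1xy}=30S_{21}+10S_{20}\alpha+10S_{30}\beta$, $g_2(P)=30S_{12}+\alpha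 g_1(P)+\beta g_{1xy}-10S_{20}d$, $g_2(Q)=30S_{22}+\beta g_1(Q)+\alpha g_{1xy}-10S_{30}d$, $g_3=20S_{13}+\alpha g_2(P)+\beta g_2(Q)-dg_{1xy}$.
   Context: For $U=(u_0,\dots,u_4)$: $\delta(U)=\prod_{j>k}(u_j-u_k)$; for each $i$, $e_1(i),e_2(i),e_3(i)$ are the elementary symmetric polynomials in $\{u_j\}_{j\neq i}$; $d_i=\prod_{j,k\neq i,\,j>k}(u_j-u_k)$; $n_i=e_2(i)^2-e_1(i)e_3(i)$; $M_i(U)=(-1)^id_in_i$. These satisfy $\sum_iM_i(U)u_i^k=0$ for $k\in\{0,1,4,5\}$, so $P,Q\in Y\cap\Lambda$. The quantities $S_{mn}$ are polynomial in the $u_i$ and $l_i$; in particular $S_{20}=e_2$ and $S_{30}=e_3$ (elementary symmetric polynomials of $u_0,\dots,u_4$). *)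

(* Defs.v *)
(* Complex numbers are modelled as R[i] for an arbitrary
   R : realType (complete archimedean ordered field, i.e. the reals). *)
From HB Require Import structures.
From mathcomp Require Import all_boot all_order all_algebra.
From mathcomp Require Import reals.
From mathcomp.real_closed Require Export complex.
Set Implicit Arguments. Unset Strict Implicit. Unset Printing Implicit Defensive.
Import Order.TTheory GRing.Theory Num.Theory.
Local Open Scope ring_scope.

Section Defs.
Variable C : fieldType.
Implicit Types (u l : 'I_5 -> C).

Definition delta u : C :=
  \prod_(j < 5) \prod_(k < 5 | (k < j)%N) (u j - u k).

Definition e1 u (i : 'I_5) : C := \sum_(j < 5 | j != i) u j.
Definition e2 u (i : 'I_5) : C :=
  \sum_(j < 5 | j != i) \sum_(k < 5 | (k != i) && (j < k)%N) u j * u k.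
Definition e3 u (i : 'I_5) : C :=
  \sum_(j < 5 | j != i) \sum_(k < 5 | (k != i) && (j < k)%N)
     \sum_(m < 5 | (m != i) && (k < m)%N) u j * u k * u m.

Definition dd u (i : 'I_5) : C :=
  \prod_(j < 5 | j != i) \prod_(k < 5 | (k != i) && (k < j)%N) (u j - u k).

Definition nn u (i : 'I_5) : C := e2 u i ^+ 2 - e1 u i * e3 u i.

Definition M u (i : 'I_5) : C := (-1) ^+ i * dd u i * nn u i.

Definition S u l (m n : nat) : C :=
  (\sum_(i < 5) M u i * u i ^+ m * l i ^+ n) / delta u.

Definition inLambda u (v : 'I_5 -> C) : Prop :=
  \sum_(i < 5) M u i * v i = 0 /\ \sum_(i < 5) M u i * u i ^+ 4 * v i = 0.

(* the quintic of Y restricted to Lambda, in coordinates [x:y:z] for xP+yQ+zR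
   with P = (1,..,1), Q = u, R = l *)
Definition Fres u l (x y z : C) : C :=
  \sum_(i < 5) M u i * (x + y * u i + z * l i) ^+ 5.

Definition conic (d alpha beta x y z : C) : C :=
  d * z ^+ 2 - (beta * x + alpha * y) * z + x * y.

Definition cubic (k : nat -> nat -> C) (x y z : C) : C :=
  \sum_(a < 4) \sum_(b < 4 - a) k a b * x ^+ a * y ^+ b * z ^+ (3 - a - b).

Definition g1P u l beta : C := 20%:R * S u l 1 1 + 10%:R * S u l 2 0 * beta.
Definition g1Q u l alpha : C := 20%:R * S u l 3 1 + 10%:R * S u l 3 0 * alpha.
Definition g1xy u l alpha beta : C :=
  30%:R * S u l 2 1 + 10%:R * S u l 2 0 * alpha + 10%:R * S u l 3 0 * beta.
Definition g2P u l alpha beta d : C :=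
  30%:R * S u l 1 2 + alpha * g1P u l beta + beta * g1xy u l alpha beta
  - 10%:R * S u l 2 0 * d.
Definition g2Q u l alpha beta d : C :=
  30%:R * S u l 2 2 + beta * g1Q u l alpha + alpha * g1xy u l alpha beta
  - 10%:R * S u l 3 0 * d.
Definition g3 u l alpha beta d : C :=
  20%:R * S u l 1 3 + alpha * g2P u l alpha beta d + beta * g2Q u l alpha beta d
  - d * g1xy u l alpha beta.

End Defs.

(* Main.v *)
Require Import Defs.
From HB Require Import structures.
From mathcomp Require Import all_boot all_order all_algebra ring.
From mathcomp Require Import reals.
From mathcomp.real_closed Require Import complex.
Import Order.TTheory GRing.Theory Num.Theory.
Set Implicit Arguments. Unset Strict Implicit. Unset Printing Implicit Defensive.
Local Open Scope ring_scope.

Lemma poly6 (F : numFieldType) (a : nat -> F) :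
  (forall t : F, \sum_(i < 6) a i * t ^+ i = 0) -> forall i, (i < 6)%N -> a i = 0.
Proof.
move=> h i hi.
have p0 : \poly_(j < 6) a j = 0.
  apply: (@roots_geq_poly_eq0 _ _ [seq j%:R | j <- iota 0 6]).
  - by apply/allP => t _; rewrite /root horner_poly h.
  - by rewrite map_inj_uniq ?iota_uniq // => m n /eqP; rewrite eqr_nat => /eqP.
  - by rewrite size_map size_iota size_poly.
by have := coef_poly 6 a i; rewrite p0 coef0 hi => <-.
Qed.

Lemma cubicE (F : fieldType) (k : nat -> nat -> F) x y z :
  cubic k x y z = k 0 0 * z^+3 + k 0 1 * y * z^+2 + k 0 2 * y^+2 * z + k 0 3 * y^+3
   + k 1 0 * x * z^+2 + k 1 1 * x * y * z + k 1 2 * x * y^+2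
   + k 2 0 * x^+2 * z + k 2 1 * x^+2 * y + k 3 0 * x^+3.
Proof. rewrite /cubic !big_ord_recr !big_ord0 /=; ring. Qed.

Definition T (F : fieldType) (u l : 'I_5 -> F) (m n : nat) : F :=
  \sum_(i < 5) M u i * u i ^+ m * l i ^+ n.
Definition Cf (F : fieldType) (u l : 'I_5 -> F) (k : nat -> nat -> F) (d alpha beta : F) (b c : nat) : F :=
  match b, c with
  | 0, 0 => 1%:R * T u l 0 0 - (0)
  | 0, 1 => 5%:R * T u l 0 1 - (- beta * k 3 0)
  | 0, 2 => 10%:R * T u l 0 2 - (- beta * k 2 0 + d * k 3 0)
  | 0, 3 => 10%:R * T u l 0 3 - (- beta * k 1 0 + d * k 2 0)
  | 0, 4 => 5%:R * T u l 0 4 - (- beta * k 0 0 + d * k 1 0)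
  | 0, 5 => 1%:R * T u l 0 5 - (d * k 0 0)
  | 1, 0 => 5%:R * T u l 1 0 - (k 3 0)
  | 1, 1 => 20%:R * T u l 1 1 - (k 2 0 - beta * k 2 1 - alpha * k 3 0)
  | 1, 2 => 30%:R * T u l 1 2 - (k 1 0 - beta * k 1 1 - alpha * k 2 0 + d * k 2 1)
  | 1, 3 => 20%:R * T u l 1 3 - (k 0 0 - beta * k 0 1 - alpha * k 1 0 + d * k 1 1)
  | 1, 4 => 5%:R * T u l 1 4 - (- alpha * k 0 0 + d * k 0 1)
  | 2, 0 => 10%:R * T u l 2 0 - (k 2 1)
  | 2, 1 => 30%:R * T u l 2 1 - (k 1 1 - beta * k 1 2 - alpha * k 2 1)
  | 2, 2 => 30%:R * T u l 2 2 - (k 0 1 - beta * k 0 2 - alpha * k 1 1 + d * k 1 2)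
  | 2, 3 => 10%:R * T u l 2 3 - (- alpha * k 0 1 + d * k 0 2)
  | 3, 0 => 10%:R * T u l 3 0 - (k 1 2)
  | 3, 1 => 20%:R * T u l 3 1 - (k 0 2 - beta * k 0 3 - alpha * k 1 2)
  | 3, 2 => 10%:R * T u l 3 2 - (- alpha * k 0 2 + d * k 0 3)
  | 4, 0 => 5%:R * T u l 4 0 - (k 0 3)
  | 4, 1 => 5%:R * T u l 4 1 - (- alpha * k 0 3)
  | 5, 0 => 1%:R * T u l 5 0 - (0)
  | _, _ => 0
  end.

Lemma expand (F : fieldType) u l (k : nat -> nat -> F) d alpha beta (x y z : F) :
  Fres u l x y z - conic d alpha beta x y z * cubic k x y z =
  \sum_(c < 6) (\sum_(b < 6) Cf u l k d alpha beta b c * x ^+ (5 - b - c) * y ^+ b) * z ^+ c.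
Proof.
rewrite cubicE /Fres /conic !big_ord_recr !big_ord0 /= /Cf /T !big_ord_recr !big_ord0 /=.
ring.
Qed.

Lemma lin_solve (F : comRingType) (a b e c : F) : e = 0 -> a - b = c * e -> a = b.
Proof. by move=> he h; apply/eqP; rewrite -subr_eq0 h he mulr0. Qed.

Lemma zero_by (F : comRingType) (a e c : F) : e = 0 -> a = c * e -> a = 0.
Proof. by move=> he ->; rewrite he mulr0. Qed.

Lemma delta_neq0 (F : fieldType) (u : 'I_5 -> F) : injective u -> delta u != 0.
Proof.
move=> inj; rewrite /delta; apply/prodf_neq0 => j _; apply/prodf_neq0 => k hk.
by rewrite subr_eq0; apply/eqP => /inj ejk; move: hk; rewrite ejk ltnn.
Qed.

Lemma TS (F : fieldType) (u l : 'I_5 -> F) m n : delta u != 0 -> T u l m n = delta u * S u l m n.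
Proof. by move=> dn; rewrite /S mulrC divfK. Qed.

Lemma cancel_d (F : fieldType) (dl x : F) : dl != 0 -> dl * x = 0 -> x = 0.
Proof. by move=> dn /eqP; rewrite mulf_eq0 (negbTE dn) => /eqP. Qed.

Theorem mainTheorem5 (R : realType) (u l : 'I_5 -> R[i]) (alpha beta : R[i]) :
  injective u ->
  (forall i, M u i != 0) ->
  (* P = (1,..,1), Q = u, R = l span Lambda *)
  inLambda u (fun _ => 1) -> inLambda u u -> inLambda u l ->
  (forall a b c : R[i], (forall i, a + b * u i + c * l i = 0) ->
     [/\ a = 0, b = 0 & c = 0]) ->
  S u l 3 0 * alpha ^+ 2 + 2%:R * S u l 3 1 * alpha + S u l 3 2 = 0 ->
  S u l 2 0 * beta ^+ 2 + 2%:R * S u l 1 1 * beta + S u l 0 2 = 0 ->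
  (exists (d : R[i]) (k : nat -> nat -> R[i]),
      [/\ cubic k 1 0 0 = 0, cubic k 0 1 0 = 0 &
          forall x y z, Fres u l x y z = conic d alpha beta x y z * cubic k x y z])
  <->
  (exists d : R[i],
      [/\ 10%:R * S u l 0 3 + beta * g2P u l alpha beta d - g1P u l beta * d = 0,
          10%:R * S u l 2 3 + alpha * g2Q u l alpha beta d - g1Q u l alpha * d = 0,
          5%:R * S u l 0 4 + beta * g3 u l alpha beta d - g2P u l alpha beta d * d = 0,
          5%:R * S u l 1 4 + alpha * g3 u l alpha beta d - g2Q u l alpha beta d * d = 0 &
          S u l 0 5 - g3 u l alpha beta d * d = 0]).
Proof.
move=> inj _ [h1a h1b] [hua hub] [hla hlb] _ Aq Bq.
have dn := delta_neq0 inj.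
split.
- case=> d [k [hk30 hk03 hF]].
  have k30 : k 3 0 = 0 by rewrite -hk30 cubicE; ring.
  have k03 : k 0 3 = 0 by rewrite -hk03 cubicE; ring.
  have h0 : forall y z, \sum_(c < 6) (\sum_(b < 6) Cf u l k d alpha beta b c * 1 ^+ (5 - b - c) * y ^+ b) * z ^+ c = 0.
    by move=> y z; rewrite -expand hF subrr.
  have hC : forall b c, (b < 6)%N -> (c < 6)%N -> Cf u l k d alpha beta b c = 0.
    move=> b c hb hc.
    have hy : forall y, \sum_(b < 6) Cf u l k d alpha beta b c * 1 ^+ (5 - b - c) * y ^+ b = 0.
      by move=> y; apply: (poly6 (a := fun c => \sum_(b < 6) Cf u l k d alpha beta b c * 1 ^+ (5 - b - c) * y ^+ b) (h0 y)).
    have := poly6 (a := fun b => Cf u l k d alpha beta b c * 1 ^+ (5 - b - c)) hy hb.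
    by rewrite expr1n mulr1.
  have c20 := hC 2 0 erefl erefl; have c30 := hC 3 0 erefl erefl.
  have c11 := hC 1 1 erefl erefl; have c31 := hC 3 1 erefl erefl.
  have c21 := hC 2 1 erefl erefl; have c12 := hC 1 2 erefl erefl.
  have c22 := hC 2 2 erefl erefl; have c13 := hC 1 3 erefl erefl.
  have c03 := hC 0 3 erefl erefl; have c23 := hC 2 3 erefl erefl.
  have c04 := hC 0 4 erefl erefl; have c14 := hC 1 4 erefl erefl.
  have c05 := hC 0 5 erefl erefl.
  rewrite /Cf /= !TS // in c20 c30 c11 c31 c21 c12 c22 c13 c03 c23 c04 c14 c05.
  have k21E : k 2 1 = delta u * (10%:R * S u l 2 0).
    by apply: (lin_solve (c := -1) c20); ring.
  have k12E : k 1 2 = delta u * (10%:R * S u l 3 0).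
    by apply: (lin_solve (c := -1) c30); ring.
  have k20E : k 2 0 = delta u * g1P u l beta.
    by apply: (lin_solve (c := -1) c11); rewrite k21E k30 /g1P; ring.
  have k02E : k 0 2 = delta u * g1Q u l alpha.
    by apply: (lin_solve (c := -1) c31); rewrite k12E k03 /g1Q; ring.
  have k11E : k 1 1 = delta u * g1xy u l alpha beta.
    by apply: (lin_solve (c := -1) c21); rewrite k12E k21E /g1xy; ring.
  have k10E : k 1 0 = delta u * g2P u l alpha beta d.
    by apply: (lin_solve (c := -1) c12); rewrite k11E k20E k21E /g2P /g1P /g1xy; ring.
  have k01E : k 0 1 = delta u * g2Q u l alpha beta d.
    by apply: (lin_solve (c := -1) c22); rewrite k11E k02E k12E /g2Q /g1Q /g1xy; ring.
  have k00E : k 0 0 = delta u * g3 u l alpha beta d.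
    by apply: (lin_solve (c := -1) c13); rewrite k01E k10E k11E /g3 /g2P /g2Q /g1P /g1Q /g1xy; ring.
  exists d; split; apply: (cancel_d dn).
  + apply: (zero_by (c := 1) c03); rewrite k10E k20E /g3 /g2P /g2Q /g1P /g1Q /g1xy; ring.
  + apply: (zero_by (c := 1) c23); rewrite k01E k02E /g3 /g2P /g2Q /g1P /g1Q /g1xy; ring.
  + apply: (zero_by (c := 1) c04); rewrite k00E k10E /g3 /g2P /g2Q /g1P /g1Q /g1xy; ring.
  + apply: (zero_by (c := 1) c14); rewrite k00E k01E /g3 /g2P /g2Q /g1P /g1Q /g1xy; ring.
  + apply: (zero_by (c := 1) c05); rewrite k00E /g3 /g2P /g2Q /g1P /g1Q /g1xy; ring.
- case=> d [E1 E2 E3 E4 E5].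
  have sz : forall m n, T u l m n = 0 -> S u l m n = 0.
    by move=> m n /eqP; rewrite TS // mulf_eq0 (negbTE dn) => /eqP.
  have s00 : S u l 0 0 = 0.
    by apply: sz; rewrite /T -[RHS]h1a; apply: eq_bigr => i _; rewrite !expr0 !mulr1.
  have s40 : S u l 4 0 = 0.
    by apply: sz; rewrite /T -[RHS]h1b; apply: eq_bigr => i _; rewrite !expr0.
  have s10 : S u l 1 0 = 0.
    by apply: sz; rewrite /T -[RHS]hua; apply: eq_bigr => i _; rewrite expr0 expr1 mulr1.
  have s50 : S u l 5 0 = 0.
    by apply: sz; rewrite /T -[RHS]hub; apply: eq_bigr => i _; rewrite expr0 mulr1 exprSr mulrA.
  have s01 : S u l 0 1 = 0.
    by apply: sz; rewrite /T -[RHS]hla; apply: eq_bigr => i _; rewrite expr0 mulr1 expr1.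
  have s41 : S u l 4 1 = 0.
    by apply: sz; rewrite /T -[RHS]hlb; apply: eq_bigr => i _; rewrite expr1.
  pose k (a b : nat) : R[i] := match a, b with
    | 2, 1 => delta u * (10%:R * S u l 2 0)
    | 1, 2 => delta u * (10%:R * S u l 3 0)
    | 2, 0 => delta u * g1P u l beta
    | 0, 2 => delta u * g1Q u l alpha
    | 1, 1 => delta u * g1xy u l alpha beta
    | 1, 0 => delta u * g2P u l alpha beta d
    | 0, 1 => delta u * g2Q u l alpha beta d
    | 0, 0 => delta u * g3 u l alpha beta d
    | _, _ => 0 end.
  have Cz : forall b c, Cf u l k d alpha beta b c = 0.
    case=> [|[|[|[|[|[|b]]]]]] [|[|[|[|[|[|c]]]]]]; rewrite /Cf /k /=; try reflexivity;
      rewrite ?TS //.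
    + by apply: (zero_by (c := delta u) s00); ring.
    + by apply: (zero_by (c := 5%:R * delta u) s01); ring.
    + by apply: (zero_by (c := 10%:R * delta u) Bq); rewrite /g1P; ring.
    + by apply: (zero_by (c := delta u) E1); ring.
    + by apply: (zero_by (c := delta u) E3); ring.
    + by apply: (zero_by (c := delta u) E5); ring.
    + by apply: (zero_by (c := 5%:R * delta u) s10); ring.
    + by rewrite /g1P; ring.
    + by rewrite /g2P /g1P /g1xy; ring.
    + by rewrite /g3 /g2P /g2Q /g1P /g1Q /g1xy; ring.
    + by apply: (zero_by (c := delta u) E4); ring.
    + by ring.
    + by rewrite /g1xy; ring.
    + by rewrite /g2Q /g1Q /g1xy; ring.
    + by apply: (zero_by (c := delta u) E2); ring.
    + by ring.
    + by rewrite /g1Q; ring.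
    + by apply: (zero_by (c := 10%:R * delta u) Aq); rewrite /g1Q; ring.
    + by apply: (zero_by (c := 5%:R * delta u) s40); ring.
    + by apply: (zero_by (c := 5%:R * delta u) s41); ring.
    + by apply: (zero_by (c := delta u) s50); ring.
  exists d, k; split.
  + by rewrite cubicE /k /=; ring.
  + by rewrite cubicE /k /=; ring.
  + move=> x y z; apply/eqP; rewrite -subr_eq0 expand; apply/eqP.
    rewrite big1 // => c _; rewrite big1 ?mul0r // => b _.
    by rewrite Cz !mul0r.
Qed.
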